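(* Assume the TFM must confirm every transaction included in the block. Then no (possibly randomized) TFM $(\mathbf x,\mathbf p,\mu)$ with non-trivial miner revenue satisfies weak UIC, weak MIC and $1$-weak-SCP simultaneously, whether the block size is finite or infinite. Moreover, if the block size is finite, the only (possibly randomized) such TFM satisfying weak UIC, weak MIC and $1$-weak-SCP is the trivial mechanism that never confirms any transaction and always pays the miner nothing.
   Context: Setting (TFM). Each user $i$ has a true value $v_i\ge0$ and submits a single bid $b_i\ge0$. A block holds at most $B$ transactions ($B$ finite or infinite). A TFM consists of an inclusion rule (run by the miner, choosing at most $B$ bids to include, possibly using the miner's random coins) and payment and miner-revenue rules (run by the blockchain on the included bids, possibly using fresh trusted blockchain randomness revealed only after the miner commits to the inclusion). Here every included bid is confirmed. Confirmed bids pay at most their bid, unconfirmed bids pay $0$, the miner receives at most the total payment, and the rest is burnt. The mechanism treats users symmetrically. Composing the honest inclusion rule with the other rules gives $(\mathbf x,\mathbf p,\mu)$: $x_i(\mathbf b)$ the probability user $i$ is confirmed, $p_i(\mathbf b)$ its expected payment, $\mu(\mathbf b)$ the miner's expected revenue. Non-trivial miner revenue: $\mu$ not identically $0$. Strategic players: a user, the miner, or the miner with some users; they may have users bid untruthfully after seeing all bids, inject fake bids (true value $0$), and (if the miner is involved) include any at most $B$ available bids, with arbitrarily chosen (not necessarily random) inclusion choices. Weak ($1$-strict) utility: miner revenue (if the miner is in the player) plus $v-p$ for each confirmed transaction of the player (true value $v$, payment $p$), minus $(b-v)$ for each unconfirmed transaction of the player with bid $b>v$; expected values are used. Weak UIC: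 with an honest miner, each user's expected weak utility is maximized by truthful bidding without fake bids, whatever the other bids. Weak MIC: the miner's expected weak utility is maximized by honestly following the inclusion rule, whatever the bids. $1$-weak-SCP: for every coalition of the miner and one user, expected joint weak utility is maximized by truthful bidding and honest miner behavior, whatever the other bids. *)

(* Defs.v *)
From mathcomp Require Import all_boot all_order all_algebra.
From mathcomp Require Import fingroup perm reals.
Set Implicit Arguments. Unset Strict Implicit. Unset Printing Implicit Defensive.
Import Order.TTheory GRing.Theory Num.Theory.
Local Open Scope ring_scope.

(* A bid vector is a [seq R]; users are identified with positions.          *)
(* An inclusion outcome is a mask [m : seq bool] of the same length as the  *)
(* bid vector (m_i = true iff bid i is included, hence confirmed).          *)
(* Block size: [None] = infinite, [Some B] = at most B transactions.        *)

Definition capacity := option nat.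
Definition fits (B : capacity) (k : nat) : bool :=
  if B is Some B' then (k <= B')%N else true.

Section TFM.
Variable R : realType.

Record tfm := TFM {
  (* honest (possibly randomized) inclusion rule: probability of each mask *)
  incl : seq R -> seq bool -> R;
  (* payment rule on the list of included bids: expected payment of the
     j-th included bid (expectation over the blockchain's randomness)       *)
  pay  : seq R -> nat -> R;
  (* miner-revenue rule on the list of included bids (expected value)       *)
  rev  : seq R -> R }.

Definition nonneg_bids (b : seq R) : bool := all (fun x => 0 <= x) b.

Definition perm_seq (T : Type) (x0 : T) (n : nat) (s : {perm 'I_n}) (l : seq T)
  : seq T := [seq nth x0 l (val (s i)) | i <- enum 'I_n].

(* position, inside the included list, of the included bid i *)
Definition sub_idx (m : seq bool) (i : nat) : nat := count id (take i m).

Definition is_tfm (B : capacity) (T : tfm) : Prop :=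
  (forall b, nonneg_bids b ->
     (forall m, 0 <= incl T b m) /\
     (forall m, size m <> size b -> incl T b m = 0) /\
     (forall m, ~~ fits B (count id m) -> incl T b m = 0) /\
     \sum_(m : (size b).-tuple bool) incl T b m = 1) /\
  (* confirmed bids pay (nonnegatively) at most their bid; the miner
     receives (nonnegatively) at most the total payment, the rest is burnt *)
  (forall s, nonneg_bids s ->
     (forall j, (j < size s)%N -> 0 <= pay T s j <= nth 0 s j) /\
     0 <= rev T s <= \sum_(j < size s) pay T s j) /\
  (forall b (s : {perm 'I_(size b)}) m, nonneg_bids b -> size m = size b ->
     incl T (perm_seq 0 s b) (perm_seq false s m) = incl T b m) /\
  (forall l (s : {perm 'I_(size l)}), nonneg_bids l ->
     rev T (perm_seq 0 s l) = rev T l /\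
     forall j : 'I_(size l), pay T (perm_seq 0 s l) j = pay T l (s j)).

Definition xo (T : tfm) (b : seq R) (i : nat) : R :=
  \sum_(m : (size b).-tuple bool) incl T b m * (nth false m i)%:R.
Definition po (T : tfm) (b : seq R) (i : nat) : R :=
  \sum_(m : (size b).-tuple bool)
     incl T b m * (if nth false m i then pay T (mask m b) (sub_idx m i) else 0).
Definition muo (T : tfm) (b : seq R) : R :=
  \sum_(m : (size b).-tuple bool) incl T b m * rev T (mask m b).

(* Weak (1-strict) utility of the users' part of a player, for a realized
   mask m.  [role] is aligned with b: [Some v] = transaction of the player
   with true value v (fake bids have value 0), [None] = not the player's. *)
Definition user_util (T : tfm) (b : seq R) (role : seq (option R))
    (m : seq bool) : R :=
  \sum_(i < size b)
    match nth None role i with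
    | None => 0
    | Some v =>
        if nth false m i then v - pay T (mask m b) (sub_idx m i)
        else if v < nth 0 b i then - (nth 0 b i - v) else 0
    end.

Definition exp_user_util (T : tfm) (b : seq R) (role : seq (option R)) : R :=
  \sum_(m : (size b).-tuple bool) incl T b m * user_util T b role m.

(* roles: the honest user (bid = value v, appended last) and a deviating
   user (real bid beta, then fake bids f of true value 0) *)
Definition role_honest (others : seq R) (v : R) : seq (option R) :=
  nseq (size others) None ++ [:: Some v].
Definition role_dev (others : seq R) (v : R) (f : seq R) : seq (option R) :=
  nseq (size others) None ++ Some v :: nseq (size f) (Some 0).

Definition weak_UIC (T : tfm) : Prop :=
  forall (others : seq R) (v beta : R) (f : seq R),
    nonneg_bids others -> 0 <= v -> 0 <= beta -> nonneg_bids f ->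
    exp_user_util T (others ++ beta :: f) (role_dev others v f)
      <= exp_user_util T (rcons others v) (role_honest others v).

Definition weak_MIC (B : capacity) (T : tfm) : Prop :=
  forall (b f : seq R) (m : seq bool),
    nonneg_bids b -> nonneg_bids f ->
    size m = size (b ++ f) -> fits B (count id m) ->
    rev T (mask m (b ++ f))
      + user_util T (b ++ f) (nseq (size b) None ++ nseq (size f) (Some 0)) m
      <= muo T b.

Definition weak_SCP1 (B : capacity) (T : tfm) : Prop :=
  forall (others : seq R) (v beta : R) (f : seq R) (m : seq bool),
    nonneg_bids others -> 0 <= v -> 0 <= beta -> nonneg_bids f ->
    size m = size (others ++ beta :: f) -> fits B (count id m) ->
    rev T (mask m (others ++ beta :: f))
      + user_util T (others ++ beta :: f) (role_dev others v f) m
    <= \sum_(m0 : (size (rcons others v)).-tuple bool)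
         incl T (rcons others v) m0 *
         (rev T (mask m0 (rcons others v))
          + user_util T (rcons others v) (role_honest others v) m0).

Definition nontrivial_revenue (T : tfm) : Prop :=
  exists b, nonneg_bids b /\ muo T b <> 0.

Definition trivial_tfm (T : tfm) : Prop :=
  forall b, nonneg_bids b -> (forall i, xo T b i = 0) /\ muo T b = 0.

End TFM.

(* Main.v *)
Require Import Defs.
From mathcomp Require Import all_boot all_order all_algebra.
From mathcomp Require Import fingroup perm reals.
From mathcomp Require Import lra.
Set Implicit Arguments. Unset Strict Implicit. Unset Printing Implicit Defensive.
Import Order.TTheory GRing.Theory Num.Theory.
Local Open Scope ring_scope.
Local Notation rvn := Defs.rev.

Lemma nth_mask_sub (T : Type) (x0 : T) (m : seq bool) (s : seq T) i :
  size m = size s -> nth false m i -> nth x0 (mask m s) (sub_idx m i) = nth x0 s i.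
Proof.
rewrite /sub_idx.
elim: m s i => [|b m IH] [|x s] [|i] //= [Hs] Hi.
- by rewrite Hi.
- case: b => /=; first by move=> *; apply: IH.
  by move=> *; exact: IH.
Qed.

Lemma sub_idx_lt (T : Type) (m : seq bool) (s : seq T) i :
  size m = size s -> nth false m i -> (sub_idx m i < size (mask m s))%N.
Proof.
move=> Hs Hi; rewrite size_mask // /sub_idx.
elim: m i Hi {Hs} => [|b m IH] [|i] //=.
- by move=> ->.
- by move=> /IH; case: b.
Qed.

Lemma user_util_last (R : realType) (T : tfm R) (b : seq R) n (m : seq bool) v :
  size b = n.+1 ->
  user_util T b (nseq n None ++ [:: Some v]) m =
  (if nth false m n then v - pay T (mask m b) (sub_idx m n)
   else if v < nth 0 b n then - (nth 0 b n - v) else 0).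
Proof.
move=> Hs; rewrite /user_util.
rewrite -(big_mkord xpredT (fun i => match nth None (nseq n None ++ [:: Some v]) i with
    | None => 0
    | Some v0 =>
        if nth false m i then v0 - pay T (mask m b) (sub_idx m i)
        else if v0 < nth 0 b i then - (nth 0 b i - v0) else 0
    end)).
rewrite Hs big_nat_recr //= big1_seq ?add0r.
  by rewrite nth_cat size_nseq ltnn subnn.
move=> i /andP[_]; rewrite mem_index_iota => /andP[_ Hi].
by rewrite nth_cat size_nseq Hi nth_nseq Hi.
Qed.

Lemma user_util_none (R : realType) (T : tfm R) (b : seq R) (m : seq bool) :
  user_util T b (nseq (size b) None) m = 0.
Proof.
rewrite /user_util big1 // => i _.
by rewrite nth_nseq ltn_ord.
Qed.

Lemma fits_le B m n : fits B n -> (m <= n)%N -> fits B m.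
Proof. by case: B => //= b Hn Hm; apply: leq_trans Hm Hn. Qed.

Lemma sub_idx_full k i : (i <= k)%N -> sub_idx (nseq k true) i = i.
Proof.
rewrite /sub_idx; elim: k i => [|k IH] [|i] //= Hi.
by rewrite IH.
Qed.

Lemma nth_full k i : (i < k)%N -> nth false (nseq k true) i.
Proof. by move=> Hi; rewrite nth_nseq Hi. Qed.

Lemma count_lt_full k (m : k.-tuple bool) :
  m != nseq_tuple k true -> (count id m < k)%N.
Proof.
move=> Hne; have := count_size id m; rewrite size_tuple leq_eqVlt.
case/orP=> [/eqP E|//]; exfalso; move/eqP: Hne; apply; apply: val_inj => /=.
have : all id m by rewrite all_count E size_tuple.
have -> : all id m = all (pred1 true) m by apply: eq_all => x; case: x.
by move/all_pred1P; rewrite size_tuple.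
Qed.

Lemma count_m0 k : count id (nseq k false ++ [:: true]) = 1%N.
Proof. by elim: k. Qed.

Lemma sub_idx_m0 k : sub_idx (nseq k false ++ [:: true]) k = 0%N.
Proof. by rewrite /sub_idx; elim: k. Qed.

Lemma nth_m0 k : nth false (nseq k false ++ [:: true]) k.
Proof. by elim: k. Qed.

Lemma nth_count0 (m : seq bool) i : count id m = 0%N -> nth false m i = false.
Proof. by elim: m i => [|b m IH] [|i] //=; case: b => //= /IH. Qed.

Lemma nseq_last (R : realType) k (x : R) : nseq k x ++ [:: x] = nseq k.+1 x.
Proof. by elim: k => //= k ->. Qed.


Lemma incl_ge0 (R : realType) B (T : tfm R) b m :
  is_tfm B T -> nonneg_bids b -> 0 <= incl T b m.
Proof. by move=> [H _] Hb; case: (H b Hb). Qed.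

Lemma incl_sum (R : realType) B (T : tfm R) b :
  is_tfm B T -> nonneg_bids b -> \sum_(m : (size b).-tuple bool) incl T b m = 1.
Proof. by move=> [H _] Hb; case: (H b Hb) => _ [_ [_ ->]]. Qed.

Lemma incl_fit (R : realType) B (T : tfm R) b m :
  is_tfm B T -> nonneg_bids b -> ~~ fits B (count id m) -> incl T b m = 0.
Proof. by move=> [H _] Hb; case: (H b Hb) => _ [_ [H' _]]; apply: H'. Qed.

Lemma pay_bnd (R : realType) B (T : tfm R) s j :
  is_tfm B T -> nonneg_bids s -> (j < size s)%N -> 0 <= pay T s j <= nth 0 s j.
Proof. by move=> [_ [H _]] Hs; case: (H s Hs) => Hp _; apply: Hp. Qed.

Lemma rev_ge0 (R : realType) B (T : tfm R) s :
  is_tfm B T -> nonneg_bids s -> 0 <= rvn T s.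
Proof. by move=> [_ [H _]] Hs; case: (H s Hs) => _ /andP[]. Qed.

Lemma rev_nil (R : realType) B (T : tfm R) : is_tfm B T -> rvn T [::] = 0.
Proof.
move=> [_ [H _]]; case: (H [::] isT) => _ /andP[H1 H2].
by apply/eqP; rewrite eq_le H1 andbT; move: H2; rewrite big_ord0.
Qed.

Lemma pay_incl (R : realType) B (T : tfm R) b (m : seq bool) i :
  is_tfm B T -> nonneg_bids b -> size m = size b -> nth false m i ->
  0 <= pay T (mask m b) (sub_idx m i) <= nth 0 b i.
Proof.
move=> HT Hb Hs Hi; rewrite -(nth_mask_sub 0 Hs Hi).
apply: (pay_bnd HT); first exact: all_mask.
exact: sub_idx_lt.
Qed.

Lemma muo_small (R : realType) (T : tfm R) n b :
  (forall l, nonneg_bids l -> (size l <= n)%N -> rvn T l = 0) ->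
  nonneg_bids b -> (size b <= n)%N -> muo T b = 0.
Proof.
move=> IH Hb Hn; rewrite /muo big1 // => m _.
rewrite IH ?mulr0 //; first exact: all_mask.
rewrite size_mask ?size_tuple //.
apply: leq_trans Hn; have := count_size id m; by rewrite size_tuple.
Qed.

Lemma rev_le_pay (R : realType) B (T : tfm R) n s' x :
  is_tfm B T -> weak_MIC B T -> fits B n.+1 ->
  (forall l, nonneg_bids l -> (size l <= n)%N -> rvn T l = 0) ->
  nonneg_bids s' -> size s' = n -> 0 <= x ->
  rvn T (s' ++ [:: x]) <= pay T (s' ++ [:: x]) n.
Proof.
move=> HT HM Hf IH Hs Hn Hx.
have Hx' : nonneg_bids [:: x] by rewrite /nonneg_bids /= Hx.
have Hsz : size (s' ++ [:: x]) = n.+1 by rewrite size_cat Hn addn1.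
have Hc : count id (nseq n.+1 true) = n.+1 by rewrite count_nseq mul1n.
have := HM s' [:: x] (nseq n.+1 true) Hs Hx'.
rewrite size_nseq Hsz Hc => /(_ erefl Hf).
rewrite mask_true ?Hsz // Hn user_util_last // nth_full // sub_idx_full //.
rewrite mask_true ?Hsz // (muo_small IH Hs) ?Hn // => H; lra.
Qed.

Lemma x_last_one (R : realType) B (T : tfm R) n s' beta :
  is_tfm B T -> weak_SCP1 B T -> fits B 1 ->
  nonneg_bids s' -> size s' = n -> 0 < beta ->
  (forall m : (size (s' ++ [:: beta])).-tuple bool,
    incl T (s' ++ [:: beta]) m *
      (rvn T (mask m (s' ++ [:: beta])) +
       user_util T (s' ++ [:: beta]) (nseq n None ++ [:: Some beta]) m)
    <= incl T (s' ++ [:: beta]) m * (beta * (nth false m n)%:R)) ->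
  1 <= xo T (s' ++ [:: beta]) n.
Proof.
move=> HT HS Hf1 Hs Hn Hb Hterm.
have Hsz0 : size (s' ++ [:: 0]) = n.+1 by rewrite size_cat Hn addn1.
have Hszm : size (nseq n false ++ [:: true]) = size (s' ++ 0 :: [::]).
  by rewrite size_cat size_nseq Hsz0 addn1.
have := HS s' beta 0 [::] (nseq n false ++ [:: true]) Hs (ltW Hb) (lexx 0) isT Hszm.
rewrite count_m0 => /(_ Hf1).
rewrite -cats1 /role_dev /role_honest /= Hn.
rewrite mask_cat ?size_nseq ?Hn // mask_false /=.
rewrite user_util_last // nth_m0 sub_idx_m0 mask_cat ?size_nseq ?Hn // mask_false /=.
move=> H.
have H0 : nonneg_bids [:: (0:R)] by rewrite /nonneg_bids /= lexx.
have Hp := pay_bnd (s := [:: 0]) (j := 0%N) HT H0 isT.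
have Hr := rev_ge0 HT H0.
have H2 : beta <= beta * xo T (s' ++ [:: beta]) n.
  apply: (le_trans _ (le_trans H _)); first by move: Hp => /= /andP[? ?]; lra.
  rewrite /xo mulr_sumr; apply: ler_sum => m _.
  by apply: (le_trans (Hterm m)); rewrite mulrCA.
by move: H2; rewrite -{1}(mulr1 beta) ler_pM2l.
Qed.

Lemma sum_split (R : realType) (I : finType) (F G : I -> R) i0 w c :
  \sum_i F i = 1 -> (forall i, 0 <= F i) -> (forall i, i != i0 -> G i <= w) ->
  G i0 <= c -> \sum_i F i * G i <= w - F i0 * (w - c).
Proof.
move=> H1 H0 HG Hc.
rewrite (bigD1 i0) //= in H1; rewrite (bigD1 i0) //=.
have : \sum_(i | i != i0) F i * G i <= \sum_(i | i != i0) F i * w.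
  by apply: ler_sum => i Hi; apply: ler_wpM2l; [exact: H0 | exact: HG].
rewrite -mulr_suml.
have : F i0 * G i0 <= F i0 * c by apply: ler_wpM2l.
move: H1; move: (\sum_(i | i != i0) F i) (\sum_(i | i != i0) F i * G i) => S1 S2 H1 Ha Hb.
have E : S1 = 1 - F i0 by lra.
rewrite E mulrBl mul1r in Hb; rewrite mulrBr; lra.
Qed.

Lemma arith_fin (R : realType) (beta a b c d e f w : R) :
  beta = a / 2 -> 0 < a -> a <= b -> f <= w - c * b -> e <= f ->
  (w - beta) * d <= e -> w - beta <= (w - beta) * d -> b <= c * b -> False.
Proof. move=> *; lra. Qed.

Lemma key (R : realType) B (T : tfm R) n s' w :
  is_tfm B T -> weak_UIC T -> weak_MIC B T -> weak_SCP1 B T -> fits B n.+1 ->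
  (forall l, nonneg_bids l -> (size l <= n)%N -> rvn T l = 0) ->
  nonneg_bids s' -> size s' = n -> 0 <= w ->
  rvn T (s' ++ [:: w]) = 0.
Proof.
move=> HT HU HM HS Hf IH Hs Hn Hw.
have Hsz : size (s' ++ [:: w]) = n.+1 by rewrite size_cat Hn addn1.
have Hsn : nonneg_bids (s' ++ [:: w]) by rewrite /nonneg_bids all_cat; apply/andP; split; [exact: Hs | rewrite /= Hw].
have Hr0 := rev_ge0 HT Hsn.
apply/eqP; rewrite eq_le Hr0 andbT leNgt; apply/negP => Hr.
have Hb := rev_le_pay HT HM Hf IH Hs Hn Hw.
have Hnth : nth 0 (s' ++ [:: w]) n = w by rewrite nth_cat Hn ltnn subnn.
have Hpw : pay T (s' ++ [:: w]) n <= w.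
  have := pay_bnd HT Hsn (j := n); rewrite Hsz Hnth => /(_ (ltnSn n)) /andP[].
  by [].
have Hmuo : muo T (s' ++ [:: w]) =
   incl T (s' ++ [:: w]) (nseq_tuple (size (s' ++ [:: w])) true) * rvn T (s' ++ [:: w]).
  rewrite /muo (bigD1 (nseq_tuple (size (s' ++ [:: w])) true)) //= big1 ?addr0.
    by rewrite mask_true.
  move=> m Hm; rewrite IH ?mulr0 //; first exact: all_mask.
  rewrite size_mask ?size_tuple // -ltnS -Hsz; exact: count_lt_full Hm.
have Hmic : rvn T (s' ++ [:: w]) <= muo T (s' ++ [:: w]).
  have := HM (s' ++ [:: w]) [::] (nseq_tuple (size (s' ++ [:: w])) true) Hsn isT.
  rewrite /= !cats0 size_nseq count_nseq mul1n => /(_ erefl).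
  rewrite mask_true // user_util_none addr0; apply.
  by apply: fits_le Hf _; rewrite Hsz.
have Hfull1 : 1 <= incl T (s' ++ [:: w]) (nseq_tuple (size (s' ++ [:: w])) true).
  by move: Hmic; rewrite Hmuo -{1}(mul1r (rvn T _)) ler_pM2r.
pose beta := rvn T (s' ++ [:: w]) / 2.
have Hbeta : 0 < beta by rewrite /beta divr_gt0.
have Hbw : beta <= w by rewrite /beta; lra.
have Htsz : size (s' ++ [:: beta]) = n.+1 by rewrite size_cat Hn addn1.
have Ht : nonneg_bids (s' ++ [:: beta]) by rewrite /nonneg_bids all_cat; apply/andP; split; [exact: Hs | rewrite /= ltW].
have Htn : nth 0 (s' ++ [:: beta]) n = beta by rewrite nth_cat Hn ltnn subnn.
have Hx : 1 <= xo T (s' ++ [:: beta]) n.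
  apply: (x_last_one HT HS (fits_le Hf _) Hs Hn Hbeta) => // m.
  apply: ler_wpM2l; first exact: incl_ge0 HT Ht.
  rewrite user_util_last //.
  have [Em|Hm] := eqVneq m (nseq_tuple (size (s' ++ [:: beta])) true).
  - rewrite Em /= nth_full ?Htsz // sub_idx_full ?Htsz // mask_true ?Htsz //.
    have := rev_le_pay HT HM Hf IH Hs Hn (ltW Hbeta); rewrite mulr1 => H; lra.
  - rewrite IH ?add0r; first last.
    + rewrite size_mask ?size_tuple // -ltnS -Htsz; exact: count_lt_full Hm.
    + exact: all_mask.
    case Hmn: (nth false m n).
    + have := pay_incl HT Ht (size_tuple m) Hmn; rewrite Htn => /andP[H1 _].
      rewrite mulr1; lra.
    + by rewrite Htn ltxx mulr0.
have := HU s' w beta [::] Hs Hw (ltW Hbeta) isT.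
rewrite -cats1 /exp_user_util /role_dev /role_honest /= Hn.
move=> HUu.
have HL : (w - beta) * xo T (s' ++ [:: beta]) n <=
    \sum_(m : (size (s' ++ [:: beta])).-tuple bool)
       incl T (s' ++ [:: beta]) m *
       user_util T (s' ++ [:: beta]) (nseq n None ++ [:: Some w]) m.
  rewrite /xo mulr_sumr; apply: ler_sum => m _; rewrite mulrCA.
  apply: ler_wpM2l; first exact: incl_ge0 HT Ht.
  rewrite user_util_last // Htn; case Hmn: (nth false m n).
  - have := pay_incl HT Ht (size_tuple m) Hmn; rewrite Htn => /andP[_ H2].
    rewrite mulr1; lra.
  - by rewrite mulr0 ltNge Hbw.
have HR : \sum_(m : (size (s' ++ [:: w])).-tuple bool)
       incl T (s' ++ [:: w]) m *
       user_util T (s' ++ [:: w]) (nseq n None ++ [:: Some w]) m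
    <= w - incl T (s' ++ [:: w]) (nseq_tuple (size (s' ++ [:: w])) true)
           * (w - (w - pay T (s' ++ [:: w]) n)).
  have HH := (@sum_split R _ (fun m : (size (s' ++ [:: w])).-tuple bool => incl T (s' ++ [:: w]) m)
    (fun m : (size (s' ++ [:: w])).-tuple bool => user_util T (s' ++ [:: w]) (nseq n None ++ [:: Some w]) m)
    (nseq_tuple (size (s' ++ [:: w])) true) w (w - pay T (s' ++ [:: w]) n)
    (incl_sum HT Hsn) (fun m => incl_ge0 (val m) HT Hsn)). apply: HH.
  - move=> m Hm; rewrite user_util_last // Hnth; case Hmn: (nth false m n).
    + have := pay_incl HT Hsn (size_tuple m) Hmn => /andP[H0 _]; lra.
    + by rewrite ltxx.
  - rewrite user_util_last // nth_full; last by rewrite Hsz.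
    rewrite sub_idx_full; last by rewrite Hsz.
    by rewrite mask_true.
have E : w - (w - pay T (s' ++ [:: w]) n) = pay T (s' ++ [:: w]) n by lra.
rewrite E in HR.
have H1 : w - beta <= (w - beta) * xo T (s' ++ [:: beta]) n.
  by apply: ler_peMr => //; lra.
have H2 : pay T (s' ++ [:: w]) n <=
   incl T (s' ++ [:: w]) (nseq_tuple (size (s' ++ [:: w])) true) * pay T (s' ++ [:: w]) n.
  by apply: ler_peMl => //; lra.
have Hbd : beta = rvn T (s' ++ [:: w]) / 2 by [].
exact: (arith_fin Hbd Hr Hb HR HUu HL H1 H2).
Qed.

Lemma rev_zero (R : realType) B (T : tfm R) :
  is_tfm B T -> weak_UIC T -> weak_MIC B T -> weak_SCP1 B T ->
  forall n, fits B n -> forall l, nonneg_bids l -> (size l <= n)%N -> rvn T l = 0.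
Proof.
move=> HT HU HM HS; elim=> [|n IHn] Hf l Hl Hsz.
  by move: Hsz; rewrite leqn0 => /nilP ->; exact: rev_nil HT.
have IH := IHn (fits_le Hf (leqnSn n)).
rewrite leq_eqVlt in Hsz; case/orP: Hsz => [/eqP Hs | Hs]; last first.
  by apply: IH => //; rewrite -ltnS.
case/lastP: l Hl Hs => [|s' w] Hl Hs; first exact: rev_nil HT.
rewrite -cats1 in Hl *; rewrite size_rcons in Hs; case: Hs => Hs.
move: Hl; rewrite /nonneg_bids all_cat => /andP[Hs' /= /andP[Hw _]].
exact: (key HT HU HM HS Hf IH Hs' Hs Hw).
Qed.

Lemma muo_zero (R : realType) B (T : tfm R) b :
  is_tfm B T -> weak_UIC T -> weak_MIC B T -> weak_SCP1 B T ->
  nonneg_bids b -> muo T b = 0.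
Proof.
move=> HT HU HM HS Hb; rewrite /muo big1 // => m _.
case Hfit: (fits B (count id m)).
  rewrite (rev_zero HT HU HM HS Hfit) ?mulr0 //; first exact: all_mask.
  by rewrite size_mask ?size_tuple.
by rewrite (incl_fit HT Hb) ?Hfit ?mul0r.
Qed.

Lemma nth_perm_seq (T : Type) (x0 : T) n (s : {perm 'I_n}) l (j : 'I_n) :
  nth x0 (perm_seq x0 s l) j = nth x0 l (s j).
Proof. by rewrite /perm_seq (nth_map j) ?size_enum_ord // nth_ord_enum. Qed.

Lemma size_perm_seq (T : Type) (x0 : T) n (s : {perm 'I_n}) (l : seq T) :
  size (perm_seq x0 s l) = n.
Proof. by rewrite /perm_seq size_map size_enum_ord. Qed.

Lemma nonneg_nseq (R : realType) k : nonneg_bids (nseq k (1:R)).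
Proof. by apply/allP => x /nseqP [-> _]; exact: ler01. Qed.

Lemma fin_contra (R : realType) k (T : tfm R) :
  is_tfm (Some k.+1) T -> weak_UIC T -> weak_MIC (Some k.+1) T ->
  weak_SCP1 (Some k.+1) T -> False.
Proof.
move=> HT HU HM HS.
have Ht0 : nonneg_bids (nseq k.+1 (1:R) ++ [:: 1]) by rewrite nseq_last; exact: nonneg_nseq.
have Hx : 1 <= xo T (nseq k.+1 (1:R) ++ [:: 1]) k.+1.
  apply: (x_last_one HT HS isT (nonneg_nseq _ _) (size_nseq _ _) ltr01) => m.
  have [->|Hne] := eqVneq (incl T (nseq k.+1 (1:R) ++ [:: 1]) m) 0.
    by rewrite !mul0r.
  have Hfit : fits (Some k.+1) (count id m).
    by apply/negPn/negP => Hn; move/eqP: Hne; apply; exact: incl_fit HT Ht0 Hn.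
  apply: ler_wpM2l; first exact: incl_ge0 (val m) HT Ht0.
  rewrite (rev_zero HT HU HM HS Hfit) ?add0r; last first.
  - by rewrite size_mask ?size_tuple.
  - exact: all_mask.
  rewrite user_util_last; last by rewrite size_cat size_nseq addn1.
  have Htn : nth 0 (nseq k.+1 (1:R) ++ [:: 1]) k.+1 = 1.
    by rewrite nth_cat size_nseq ltnn subnn.
  case Hmn: (nth false m k.+1).
  + have := pay_incl HT Ht0 (size_tuple m) Hmn => /andP[H1 _]; rewrite mulr1; lra.
  + by rewrite Htn ltxx mulr0.
move: Hx Ht0; rewrite nseq_last => Hx Ht.
set t := nseq k.+2 (1:R) in Hx Ht *.
have Hsum := incl_sum HT Ht.
have Hz : forall m : (size t).-tuple bool, ~~ nth false m k.+1 -> incl T t m = 0.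
  have E : \sum_(m : (size t).-tuple bool) incl T t m * (1 - (nth false m k.+1)%:R) = 0.
    apply/eqP; rewrite eq_le; apply/andP; split.
    - under eq_bigr => m _ do rewrite mulrBr mulr1.
      rewrite sumrB Hsum; rewrite /xo in Hx; lra.
    - apply: sumr_ge0 => m _; apply: mulr_ge0; first exact: incl_ge0 (val m) HT Ht.
      by case: (nth false m k.+1); rewrite ?subrr ?subr0.
  move=> m Hm.
  have := psumr_eq0P _ E (i := m) isT.
  rewrite (negbTE Hm) subr0 mulr1; apply.
  move=> i _; apply: mulr_ge0; first exact: incl_ge0 (val i) HT Ht.
  by case: (nth false i k.+1); rewrite ?subrr ?subr0.
have Hall0 : forall m : (size t).-tuple bool, incl T t m = 0.
  move=> m; case Hall: (all id m).
  - apply: (incl_fit HT Ht).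
    move: Hall; rewrite all_count size_tuple => /eqP ->.
    by rewrite /t size_nseq /= ltnn.
  - move/negbT: Hall; rewrite -has_predC => /(has_nthP false) [i Hi Hni].
    rewrite size_tuple in Hi.
    have Hk : (k.+1 < size t)%N by rewrite /t size_nseq.
    pose sg := tperm (Ordinal Hi) (Ordinal Hk).
    have [_ [_ [Hsym _]]] := HT.
    rewrite -(Hsym t sg m Ht (size_tuple m)).
    have H1 : forall j : 'I_(size t), (j < k.+2)%N.
      by move=> j; rewrite -(size_nseq k.+2 (1:R)); exact: ltn_ord.
    have -> : perm_seq 0 sg t = t.
      apply: (@eq_from_nth _ 0); first by rewrite size_perm_seq.
      move=> j; rewrite size_perm_seq => Hj.
      rewrite -[j]/(nat_of_ord (Ordinal Hj)) nth_perm_seq /t !nth_nseq.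
      by rewrite !H1.
    have Hsz' : size (perm_seq false sg m) == size t by rewrite size_perm_seq.
    have := Hz (Tuple Hsz'); apply.
    rewrite /= -[k.+1]/(nat_of_ord (Ordinal Hk)) nth_perm_seq /sg tpermR.
    exact: Hni.
move: Hsum; rewrite big1 // => /eqP; by rewrite eq_sym oner_eq0.
Qed.

Local Close Scope ring_scope.

Theorem mainTheorem5 (R : realType) (B : capacity) (T : tfm R) :
  is_tfm B T ->
  ~ (nontrivial_revenue T /\ weak_UIC T /\ weak_MIC B T /\ weak_SCP1 B T) /\
  (forall k : nat, B = Some k ->
     weak_UIC T -> weak_MIC B T -> weak_SCP1 B T -> trivial_tfm T).
Proof.
move=> HT; split.
  by case=> [[b [Hb Hmu]] [HU [HM HS]]]; apply: Hmu; exact: muo_zero HT HU HM HS Hb.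
move=> k Hk HU HM HS; subst B; case: k HT HU HM HS => [|k] HT HU HM HS; last first.
  by exfalso; exact: fin_contra HT HU HM HS.
move=> b Hb; split; last exact: muo_zero HT HU HM HS Hb.
move=> i; rewrite /xo big1 // => m _.
case Hfit: (fits (Some 0) (count id m)).
  move: Hfit; rewrite /fits leqn0 => /eqP /nth_count0 ->.
  by rewrite GRing.mulr0.
by rewrite (incl_fit HT Hb) ?Hfit ?GRing.mul0r.
Qed.
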